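(* Let $m\ge1$ and $0<h<2^m$. Then the sets $\mathbb{V}_k(h)$, $k\in\mathbb{Z}^m$, are pairwise disjoint; $\mathbb{V}(h)=\bigcup_{k\in\mathbb{Z}^m}\mathbb{V}_k(h)$; $\mathbb{V}_0(h)$ is compact; $\mathbb{V}_0(h)$ is strictly convex; and $\mathbb{V}_0(h)$ has nonempty interior in $\mathbb{R}^m$. Moreover, $\mathbb{V}_0(h)=\mathbb{V}(h)\cap(0,2\pi)^m$.
   Context: $s(t)=2\sin(t/2)$. For $h\ge0$, $\mathbb{V}(h)=\{x\in\mathbb{R}^m:|\prod_{j=1}^m s(x_j)|\ge h\}$, $\mathbb{V}_0(h)=\mathbb{V}(h)\cap[0,2\pi]^m$, and for $k\in\mathbb{Z}^m$, $\mathbb{V}_k(h)=\mathbb{V}_0(h)+2\pi k=\{x+2\pi k:x\in\mathbb{V}_0(h)\}$. A set is strictly convex if for any two distinct points of it, their midpoint (indeed every point of the open segment between them) is an interior point of the set. *)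

(* Defs.v *)
From Stdlib Require Import Reals ZArith.
From mathcomp Require Import all_boot.
Set Implicit Arguments.
Unset Strict Implicit.

Local Open Scope R_scope.

Definition pt (m : nat) := 'I_m -> R.

Definition s (t : R) : R := 2 * sin (t / 2).

Definition prod_s (m : nat) (x : pt m) : R :=
  \big[Rmult/1]_(j < m) s (x j).

Definition V (m : nat) (h : R) (x : pt m) : Prop := Rabs (prod_s x) >= h.

Definition V0 (m : nat) (h : R) (x : pt m) : Prop :=
  V h x /\ forall j, 0 <= x j <= 2 * PI.

Definition Vk (m : nat) (h : R) (k : 'I_m -> Z) (x : pt m) : Prop :=
  exists y : pt m, V0 h y /\ forall j, x j = y j + 2 * PI * IZR (k j).

Definition ball_Rm (m : nat) (z : pt m) (eps : R) (w : pt m) : Prop :=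
  forall j, Rabs (w j - z j) < eps.

Definition open_Rm (m : nat) (U : pt m -> Prop) : Prop :=
  forall z, U z -> exists eps, 0 < eps /\ forall w, ball_Rm z eps w -> U w.

Definition interior_pt (m : nat) (S : pt m -> Prop) (z : pt m) : Prop :=
  exists eps, 0 < eps /\ forall w, ball_Rm z eps w -> S w.

Definition compact_Rm (m : nat) (K : pt m -> Prop) : Prop :=
  forall (I : Type) (U : I -> pt m -> Prop),
    (forall i, open_Rm (U i)) ->
    (forall x, K x -> exists i, U i x) ->
    exists l : list I, forall x, K x -> exists i, List.In i l /\ U i x.

Definition strictly_convex (m : nat) (S : pt m -> Prop) : Prop :=
  forall x y : pt m, S x -> S y -> x <> y ->
    forall t, 0 < t < 1 -> interior_pt S (fun j => (1 - t) * x j + t * y j).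

(* Main.v *)
Require Import Defs.
From Stdlib Require Import Reals ZArith.
From mathcomp Require Import all_boot.
From HB Require Import structures.
From Stdlib Require Import Lra Lia Classical FunctionalExtensionality ClassicalEpsilon.
Local Open Scope R_scope.

Lemma Rmult_assoc2 : associative Rmult. Proof. intros a b c; ring. Qed.
HB.instance Definition _ := Monoid.isComLaw.Build R 1 Rmult Rmult_assoc2 Rmult_comm Rmult_1_l.

Lemma bigR_recr n (F : 'I_n.+1 -> R) : \big[Rmult/1]_(j < n.+1) F j =
  \big[Rmult/1]_(j < n) F (widen_ord (leqnSn n) j) * F ord_max.
Proof. by rewrite big_ord_recr. Qed.

Lemma s_bound t : Rabs (s t) <= 2.
Proof.
unfold s; rewrite Rabs_mult Rabs_right; try lra.
pose proof (SIN_bound (t/2)); apply Rabs_le in H; nra.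
Qed.

Lemma sin_lip a b : Rabs (sin a - sin b) <= Rabs (a - b).
Proof.
destruct (Rtotal_order a b) as [Hab|[Hab|Hab]].
- destruct (MVT_cor2 sin cos a b Hab (fun c _ => derivable_pt_lim_sin c)) as [c [Hc _]].
  replace (sin a - sin b) with (-(sin b - sin a)) by ring. rewrite Rabs_Ropp Hc Rabs_mult.
  rewrite (Rabs_minus_sym a b). pose proof (COS_bound c).
  rewrite <- (Rmult_1_l (Rabs (b - a))) at 2. apply Rmult_le_compat_r.
  apply Rabs_pos. apply Rabs_le; lra.
- subst; rewrite !Rminus_diag Rabs_R0; lra.
- destruct (MVT_cor2 sin cos b a Hab (fun c _ => derivable_pt_lim_sin c)) as [c [Hc _]].
  rewrite Hc Rabs_mult. pose proof (COS_bound c).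
  rewrite <- (Rmult_1_l (Rabs (a - b))) at 2. apply Rmult_le_compat_r.
  apply Rabs_pos. apply Rabs_le; lra.
Qed.

Lemma s_lip a b : Rabs (s a - s b) <= Rabs (a - b).
Proof.
unfold s. replace (2 * sin (a/2) - 2 * sin (b/2)) with (2 * (sin (a/2) - sin (b/2))) by ring.
rewrite Rabs_mult (Rabs_right 2); [|lra].
pose proof (sin_lip (a/2) (b/2)).
replace (a/2 - b/2) with ((a - b) * /2) in H by field. rewrite Rabs_mult (Rabs_right (/2)) in H; lra.
Qed.

Lemma prod_lip n (a b : 'I_n -> R) d :
  (forall j, Rabs (a j) <= 2) -> (forall j, Rabs (b j) <= 2) ->
  (forall j, Rabs (a j - b j) <= d) -> 0 <= d ->
  Rabs (\big[Rmult/1]_(j < n) a j) <= 2 ^ n /\ Rabs (\big[Rmult/1]_(j < n) b j) <= 2 ^ n /\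
  Rabs (\big[Rmult/1]_(j < n) a j - \big[Rmult/1]_(j < n) b j) <= INR n * 2 ^ n * d.
Proof.
elim: n a b => [|n IH] a b Ha Hb Hd d0.
- rewrite !big_ord0 Rminus_diag Rabs_R0 Rabs_R1 /=; lra.
- rewrite !bigR_recr.
  destruct (IH (fun j => a (widen_ord (leqnSn n) j)) (fun j => b (widen_ord (leqnSn n) j)))
    as [H1 [H2 H3]]; auto.
  set A := \big[Rmult/1]_(j < n) a (widen_ord (leqnSn n) j) in H1 H3 *.
  set B := \big[Rmult/1]_(j < n) b (widen_ord (leqnSn n) j) in H2 H3 *.
  pose proof (Ha ord_max); pose proof (Hb ord_max); pose proof (Hd ord_max).
  set x := a ord_max in H H4 *. set y := b ord_max in H0 H4 *.
  assert (P : 0 < 2 ^ n) by (apply pow_lt; lra).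
  pose proof (pos_INR n).
  rewrite S_INR /=.
  split; [|split].
  + rewrite Rabs_mult Rmult_comm. apply Rmult_le_compat; auto using Rabs_pos.
  + rewrite Rabs_mult Rmult_comm. apply Rmult_le_compat; auto using Rabs_pos.
  + replace (A * x - B * y) with (A * (x - y) + (A - B) * y) by ring.
    eapply Rle_trans; [apply Rabs_triang|]. rewrite !Rabs_mult.
    pose proof (Rabs_pos A); pose proof (Rabs_pos (x - y)); pose proof (Rabs_pos (A - B)); pose proof (Rabs_pos y).
    assert (Rabs A * Rabs (x - y) <= 2 ^ n * d) by (apply Rmult_le_compat; auto).
    assert (Rabs (A - B) * Rabs y <= INR n * 2 ^ n * d * 2) by (apply Rmult_le_compat; auto).
    assert (0 <= 2 ^ n * d) by (apply Rmult_le_pos; lra).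
    assert (0 <= INR n * 2 ^ n * d) by (apply Rmult_le_pos; [apply Rmult_le_pos|]; lra).
    replace ((INR n + 1) * (2 * 2 ^ n) * d) with (2 * (INR n * 2 ^ n * d) + 2 * (2 ^ n * d)) by ring.
    lra.
Qed.

Set Implicit Arguments.

Lemma bigR_D1 n (F : 'I_n -> R) j0 : \big[Rmult/1]_(j < n) F j =
  F j0 * \big[Rmult/1]_(j < n | j != j0) F j.
Proof. by rewrite (bigD1 j0). Qed.

Lemma bigR_abs n (F : 'I_n -> R) : Rabs (\big[Rmult/1]_(j < n) F j) = \big[Rmult/1]_(j < n) Rabs (F j).
Proof. apply: (big_morph Rabs); [exact: Rabs_mult | exact: Rabs_R1]. Qed.

Lemma prod_s_lip m (x w : pt m) d : (forall j, Rabs (w j - x j) <= d) -> 0 <= d ->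
  Rabs (prod_s w - prod_s x) <= INR m * 2 ^ m * d.
Proof.
intros H d0; unfold prod_s.
destruct (@prod_lip m (fun j => s (w j)) (fun j => s (x j)) d) as [_ [_ H3]]; auto.
- intro j; apply s_bound.
- intro j; apply s_bound.
- intro j; eapply Rle_trans; [apply s_lip|apply H].
Qed.

Lemma sin_shift a k : Rabs (sin (a + IZR k * PI)) = Rabs (sin a).
Proof.
rewrite sin_plus (sin_eq_0_1 (IZR k * PI)); [|exists k; reflexivity].
rewrite Rmult_0_r Rplus_0_r Rabs_mult.
assert (Rabs (cos (IZR k * PI)) = 1).
{ pose proof (sin2_cos2 (IZR k * PI)).
  rewrite (sin_eq_0_1 (IZR k * PI)) in H; [|exists k; reflexivity].
  unfold Rsqr in H. rewrite Rmult_0_l Rplus_0_l in H.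
  destruct (Rle_dec 0 (cos (IZR k * PI))).
  - rewrite Rabs_right; [|lra]. nra.
  - rewrite Rabs_left; [|lra]. nra. }
rewrite H; ring.
Qed.

Lemma prod_s_shift m (x y : pt m) (k : 'I_m -> Z) :
  (forall j, x j = y j + 2 * PI * IZR (k j)) -> Rabs (prod_s x) = Rabs (prod_s y).
Proof.
intro H; unfold prod_s; rewrite !bigR_abs. apply: eq_bigr => j _.
rewrite H; unfold s. rewrite !Rabs_mult.
replace ((y j + 2 * PI * IZR (k j)) / 2) with (y j / 2 + IZR (k j) * PI) by field.
rewrite sin_shift; reflexivity.
Qed.

Lemma prod_s_zero m (x : pt m) j : s (x j) = 0 -> prod_s x = 0.
Proof. intro H; unfold prod_s; rewrite (@bigR_D1 m _ j) H; ring. Qed.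

Lemma V0_open_cube m h (x : pt m) : 0 < h -> V0 h x -> forall j, 0 < x j < 2 * PI.
Proof.
intros hp [HV Hc] j. destruct (Hc j) as [H1 H2].
assert (x j <> 0 /\ x j <> 2 * PI).
{ unfold V in HV; split; intro E.
  - assert (prod_s x = 0).
    { apply (@prod_s_zero m x j); unfold s; rewrite E.
      replace (0/2) with 0 by field; rewrite sin_0; ring. }
    rewrite H Rabs_R0 in HV; lra.
  - assert (prod_s x = 0).
    { apply (@prod_s_zero m x j); unfold s; rewrite E.
      replace (2 * PI/2) with PI by field; rewrite sin_PI; ring. }
    rewrite H Rabs_R0 in HV; lra. }
lra.
Qed.

Lemma part6 m h (x : pt m) : 0 < h -> (V0 h x <-> (V h x /\ forall j, 0 < x j < 2 * PI)).
Proof.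
intro hp; split.
- intro H; split; [apply H|]. apply (V0_open_cube hp H).
- intros [H1 H2]; split; auto. intro j; specialize (H2 j); lra.
Qed.

Lemma part1 m h : 0 < h -> forall k k' : 'I_m -> Z, k <> k' ->
     forall x : pt m, ~ (Vk h k x /\ Vk h k' x).
Proof.
intros hp k k' Hne x [[y [Hy Ey]] [y' [Hy' Ey']]]. apply Hne.
apply functional_extensionality; intro j.
pose proof (V0_open_cube hp Hy j); pose proof (V0_open_cube hp Hy' j).
pose proof (Ey j); pose proof (Ey' j).
assert (E : IZR (k j - k' j) * (2 * PI) = y' j - y j) by (rewrite minus_IZR; lra).
pose proof PI_RGT_0.
assert (-1 < IZR (k j - k' j) < 1).
{ split.
  - apply (Rmult_lt_reg_r (2 * PI)); [lra|]. rewrite E; lra.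
  - apply (Rmult_lt_reg_r (2 * PI)); [lra|]. rewrite E; lra. }
destruct H4 as [A B]. apply lt_IZR in A; apply lt_IZR in B. lia.
Qed.

Lemma part2 m h (x : pt m) : V h x <-> exists k : 'I_m -> Z, Vk h k x.
Proof.
pose proof PI_RGT_0.
split.
- intro HV.
  set k := fun j => (up (x j / (2 * PI)) - 1)%Z.
  exists k. exists (fun j => x j - 2 * PI * IZR (k j)). split.
  + split.
    * unfold V. rewrite <- (@prod_s_shift m x (fun j => x j - 2 * PI * IZR (k j)) k); auto.
      intro j; ring.
    * intro j. destruct (archimed (x j / (2 * PI))) as [A B].
      unfold k; rewrite minus_IZR.
      assert (x j = (x j / (2 * PI)) * (2 * PI)) by (field; lra).
      set r := x j / (2 * PI) in A B H0. set u := IZR (up r) in A B *.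
      rewrite H0. split; nra.
  + intro j; ring.
- intros [k [y [[HV _] E]]]. unfold V. rewrite (@prod_s_shift m x y k); auto.
Qed.

Lemma natmin n (g : nat -> R) : (forall k, (k < n)%N -> 0 < g k) ->
  exists e, 0 < e /\ forall k, (k < n)%N -> e <= g k.
Proof.
elim: n => [|n IH] H.
- exists 1; split; [lra|]. by [].
- destruct IH as [e [e0 He]].
  + intros k Hk; apply H; apply: (ltn_trans Hk); by [].
  + exists (Rmin e (g n)); split.
    * apply Rmin_pos; [exact e0| apply H; by []].
    * intros k Hk. rewrite ltnS leq_eqVlt in Hk. case/orP: Hk => Hk.
      -- move/eqP: Hk => ->. apply Rmin_r.
      -- eapply Rle_trans; [apply Rmin_l| apply He; exact Hk].
Qed.

Lemma finmin m (f : 'I_m -> R) : (forall j, 0 < f j) -> exists e, 0 < e /\ forall j, e <= f j.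
Proof.
destruct m as [|m'].
- intros _; exists 1; split; [lra|]. intros [j Hj]; by [].
- intro H. destruct (@natmin m'.+1 (fun k => f (inord k))) as [e [e0 He]].
  + intros k _; apply H.
  + exists e; split; auto. intro j. specialize (He j (ltn_ord j)). simpl in He.
    by rewrite inord_val in He.
Qed.

Lemma interior_strict m h (z : pt m) : (forall j, 0 < z j < 2 * PI) -> h < Rabs (prod_s z) ->
  interior_pt (V0 h) z.
Proof.
intros Hz Hp.
destruct (@finmin m (fun j => Rmin (z j) (2 * PI - z j))) as [e0 [e0p He0]].
{ intro j; specialize (Hz j); apply Rmin_pos; lra. }
set C := INR m * 2 ^ m.
assert (C0 : 0 <= C) by (apply Rmult_le_pos; [apply pos_INR| apply pow_le; lra]).
set e := Rmin e0 ((Rabs (prod_s z) - h) / (C + 1)).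
assert (ep : 0 < e) by (apply Rmin_pos; auto; apply Rdiv_lt_0_compat; lra).
exists e; split; auto. intros w Hw. split.
- unfold V.
  assert (L : Rabs (prod_s w - prod_s z) <= C * e).
  { apply prod_s_lip; [intro j; left; apply Hw | lra]. }
  assert (e * (C + 1) <= Rabs (prod_s z) - h).
  { assert (e <= (Rabs (prod_s z) - h) / (C + 1)) by apply Rmin_r.
    apply (Rmult_le_compat_r (C + 1)) in H; [|lra].
    unfold Rdiv in H. rewrite Rmult_assoc Rinv_l in H; lra. }
  pose proof (Rabs_triang_inv (prod_s z) (prod_s w)).
  rewrite Rabs_minus_sym in L. nra.
- intro j. specialize (Hw j). specialize (He0 j). specialize (Hz j).
  assert (e <= e0) by apply Rmin_l.
  pose proof (Rmin_l (z j) (2 * PI - z j)); pose proof (Rmin_r (z j) (2 * PI - z j)).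
  apply Rabs_def2 in Hw. lra.
Qed.

Lemma V0_compl_open m h : open_Rm (fun x : pt m => ~ V0 h x).
Proof.
intros x Hx.
destruct (classic (forall j, 0 <= x j <= 2 * PI)) as [Hc|Hc].
- assert (Hl : Rabs (prod_s x) < h).
  { apply Rnot_le_lt; intro; apply Hx; split; auto. unfold V; lra. }
  set C := INR m * 2 ^ m.
  assert (C0 : 0 <= C) by (apply Rmult_le_pos; [apply pos_INR| apply pow_le; lra]).
  set e := (h - Rabs (prod_s x)) / (C + 1).
  assert (ep : 0 < e) by (apply Rdiv_lt_0_compat; lra).
  exists e; split; auto. intros w Hw [HV _]. unfold V in HV.
  assert (L : Rabs (prod_s w - prod_s x) <= C * e).
  { apply prod_s_lip; [intro j; left; apply Hw | lra]. }
  assert (E : e * (C + 1) = h - Rabs (prod_s x)) by (unfold e; field; lra).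
  pose proof (Rabs_triang_inv (prod_s w) (prod_s x)). nra.
- apply not_all_ex_not in Hc. destruct Hc as [j Hj].
  destruct (Rlt_dec (x j) 0) as [Hn|Hn].
  + exists (- x j); split; [lra|]. intros w Hw [_ Hc]. specialize (Hw j); specialize (Hc j).
    apply Rabs_def2 in Hw. lra.
  + assert (2 * PI < x j) by (apply Rnot_le_lt; intro; apply Hj; split; lra).
    exists (x j - 2 * PI); split; [lra|]. intros w Hw [_ Hc]. specialize (Hw j); specialize (Hc j).
    apply Rabs_def2 in Hw. lra.
Qed.

Lemma tangent_strict a c : 0 <= a <= PI -> 0 <= c <= PI -> a <> c ->
  sin a < sin c + cos c * (a - c).
Proof.
intros Ha Hc Hne.
destruct (Rtotal_order a c) as [H|[H|H]]; [|contradiction|].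
- destruct (MVT_cor2 sin cos a c H (fun c _ => derivable_pt_lim_sin c)) as [x [Hx Hxi]].
  assert (cos c < cos x) by (apply cos_decreasing_1; lra).
  nra.
- destruct (MVT_cor2 sin cos c a H (fun c _ => derivable_pt_lim_sin c)) as [x [Hx Hxi]].
  assert (cos x < cos c) by (apply cos_decreasing_1; lra).
  nra.
Qed.

Lemma sin_conc_strict u v t : 0 <= u <= PI -> 0 <= v <= PI -> u <> v -> 0 < t < 1 ->
  (1 - t) * sin u + t * sin v < sin ((1 - t) * u + t * v).
Proof.
intros Hu Hv Hne Ht. set c := (1 - t) * u + t * v.
assert (Hc : 0 <= c <= PI) by (unfold c; split; nra).
assert (u <> c) by (unfold c; intro E; apply Hne; nra).
assert (v <> c) by (unfold c; intro E; apply Hne; nra).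
pose proof (tangent_strict Hu Hc H). pose proof (tangent_strict Hv Hc H0).
assert ((1 - t) * sin u + t * sin v < (1 - t) * (sin c + cos c * (u - c)) + t * (sin c + cos c * (v - c))) by nra.
assert ((1 - t) * (sin c + cos c * (u - c)) + t * (sin c + cos c * (v - c)) = sin c) by (unfold c; ring).
lra.
Qed.

Lemma amgm p q t : 0 < p -> 0 < q -> 0 <= t <= 1 ->
  exp ((1 - t) * ln p) * exp (t * ln q) <= (1 - t) * p + t * q.
Proof.
intros hp hq ht. rewrite <- exp_plus. set G := exp ((1 - t) * ln p + t * ln q).
set u := t * (ln p - ln q). set v := (1 - t) * (ln q - ln p).
assert (Ep : p = G * exp u).
{ unfold G, u; rewrite <- exp_plus. rewrite <- (exp_ln p) at 1; auto. f_equal; ring. }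
assert (Eq : q = G * exp v).
{ unfold G, v; rewrite <- exp_plus. rewrite <- (exp_ln q) at 1; auto. f_equal; ring. }
pose proof (exp_ineq1_le u); pose proof (exp_ineq1_le v).
assert (G0 : 0 < G) by apply exp_pos.
assert ((1 - t) * u + t * v = 0) by (unfold u, v; ring).
rewrite Ep Eq.
assert ((1 - t) * exp u + t * exp v >= 1) by nra.
nra.
Qed.

Lemma prod_G n (a b : 'I_n -> R) t : (forall j, 0 < a j) -> (forall j, 0 < b j) ->
  0 < \big[Rmult/1]_(j < n) a j /\ 0 < \big[Rmult/1]_(j < n) b j /\
  \big[Rmult/1]_(j < n) (exp ((1 - t) * ln (a j)) * exp (t * ln (b j))) =
  exp ((1 - t) * ln (\big[Rmult/1]_(j < n) a j)) * exp (t * ln (\big[Rmult/1]_(j < n) b j)).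
Proof.
intros Ha Hb.
apply: (big_ind3 (fun A B C => 0 < A /\ 0 < B /\ C = exp ((1 - t) * ln A) * exp (t * ln B))).
- rewrite ln_1 !Rmult_0_r exp_0; split; [lra|split; [lra|ring]].
- intros x1 x2 x3 y1 y2 y3 [h1 [h2 h3]] [k1 [k2 k3]]. split; [nra|split;[nra|]].
  rewrite h3 k3 !ln_mult; auto. rewrite !Rmult_plus_distr_l !exp_plus; ring.
- intros j _; split; auto.
Qed.

Lemma prod_strict n (a b : 'I_n -> R) j0 : (forall j, 0 < a j <= b j) -> a j0 < b j0 ->
  \big[Rmult/1]_(j < n) a j < \big[Rmult/1]_(j < n) b j.
Proof.
intros H H0. rewrite (@bigR_D1 n a j0) (@bigR_D1 n b j0).
assert (0 < \big[Rmult/1]_(j < n | j != j0) a j /\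
        \big[Rmult/1]_(j < n | j != j0) a j <= \big[Rmult/1]_(j < n | j != j0) b j).
{ apply: (big_ind2 (fun A B => 0 < A /\ A <= B)).
  - lra.
  - intros x1 x2 y1 y2 [h1 h2] [k1 k2]; split; [nra|]. apply Rmult_le_compat; lra.
  - intros j _; apply H. }
destruct H1. specialize (H j0). nra.
Qed.

Lemma s_pos x : 0 < x < 2 * PI -> 0 < s x.
Proof. intro H; unfold s. apply Rmult_lt_0_compat; [lra|]. apply sin_gt_0; lra. Qed.

Lemma part4 m h : 0 < h -> strictly_convex (V0 (m:=m) h).
Proof.
intros hp x y Hx Hy Hne t Ht.
pose proof PI_RGT_0.
pose proof (V0_open_cube hp Hx) as Cx. pose proof (V0_open_cube hp Hy) as Cy.
set z := fun j => (1 - t) * x j + t * y j.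
assert (Cz : forall j, 0 < z j < 2 * PI).
{ intro j; specialize (Cx j); specialize (Cy j); unfold z; split; nra. }
apply interior_strict; auto.
destruct (classic (exists j0, x j0 <> y j0)) as [[j0 Hj0]|Hn].
2:{ exfalso; apply Hne; apply functional_extensionality; intro j.
    apply NNPP; intro; apply Hn; exists j; auto. }
set G := fun j => exp ((1 - t) * ln (s (x j))) * exp (t * ln (s (y j))).
assert (Hsz : forall j, x j <> y j -> (1 - t) * s (x j) + t * s (y j) < s (z j)).
{ intros j Hj. specialize (Cx j); specialize (Cy j). unfold s, z.
  replace (((1 - t) * x j + t * y j) / 2) with ((1 - t) * (x j / 2) + t * (y j / 2)) by field.
  assert ((1 - t) * sin (x j / 2) + t * sin (y j / 2) < sin ((1 - t) * (x j / 2) + t * (y j / 2))).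
  { apply sin_conc_strict; try lra. }
  lra. }
assert (HG : forall j, 0 < G j <= (1 - t) * s (x j) + t * s (y j)).
{ intro j; split.
  - unfold G; apply Rmult_lt_0_compat; apply exp_pos.
  - apply amgm; try lra; apply s_pos; auto. }
assert (HGz : forall j, 0 < G j <= s (z j)).
{ intro j; destruct (HG j); split; auto.
  destruct (classic (x j = y j)) as [E|E].
  - unfold z; rewrite E. replace ((1 - t) * y j + t * y j) with (y j) by ring.
    rewrite E in H1; lra.
  - pose proof (Hsz j E); lra. }
assert (L1 : \big[Rmult/1]_(j < m) G j < prod_s z).
{ apply (@prod_strict m G (fun j => s (z j)) j0); auto.
  destruct (HG j0); pose proof (Hsz j0 Hj0); lra. }
destruct (@prod_G m (fun j => s (x j)) (fun j => s (y j)) t) as [Px [Py EG]].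
{ intro j; apply s_pos; auto. }
{ intro j; apply s_pos; auto. }
fold (prod_s x) in Px. fold (prod_s x) in EG. fold (prod_s y) in Py. fold (prod_s y) in EG.
assert (Hxh : h <= prod_s x) by (destruct Hx as [Hx _]; unfold V in Hx; rewrite Rabs_right in Hx; lra).
assert (Hyh : h <= prod_s y) by (destruct Hy as [Hy _]; unfold V in Hy; rewrite Rabs_right in Hy; lra).
assert (lnle : forall a b, 0 < a -> a <= b -> ln a <= ln b).
{ intros a b Ha Hab; destruct Hab as [Hab|Hab]; [left; apply ln_increasing; auto| right; rewrite Hab; auto]. }
assert (exple : forall a b, a <= b -> exp a <= exp b).
{ intros a b Hab; destruct Hab as [Hab|Hab]; [left; apply exp_increasing; auto| right; rewrite Hab; auto]. }
assert (E1 : exp ((1 - t) * ln h) <= exp ((1 - t) * ln (prod_s x))).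
{ apply exple. apply Rmult_le_compat_l; [lra|]. apply lnle; auto. }
assert (E2 : exp (t * ln h) <= exp (t * ln (prod_s y))).
{ apply exple. apply Rmult_le_compat_l; [lra|]. apply lnle; auto. }
assert (E3 : exp ((1 - t) * ln h) * exp (t * ln h) = h).
{ rewrite <- exp_plus. replace ((1 - t) * ln h + t * ln h) with (ln h) by ring. apply exp_ln; auto. }
assert (h <= \big[Rmult/1]_(j < m) G j).
{ unfold G; rewrite EG. rewrite <- E3. apply Rmult_le_compat; auto; left; apply exp_pos. }
rewrite Rabs_right; lra.
Qed.

Lemma cover1d L (d : R -> R) : (forall t, 0 <= t <= L -> 0 < d t) ->
  exists T : list R, (forall t, List.In t T -> 0 <= t <= L) /\
    forall u, 0 <= u <= L -> exists t, List.In t T /\ Rabs (u - t) < d t.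
Proof.
intro Hd.
assert (cond : forall t, (exists u, 0 <= t <= L /\ Rabs (u - t) < d t) -> 0 <= t <= L).
{ intros t [u [H _]]; exact H. }
set fam := Rtopology.mkfamily (fun t => 0 <= t <= L) (fun t u => 0 <= t <= L /\ Rabs (u - t) < d t) cond.
destruct (compact_P3 0 L fam) as [D [Hcov [l Hl]]].
- split.
  + intros u Hu. exists u. simpl. split; auto. rewrite Rminus_diag Rabs_R0; auto.
  + intros t u [Ht Hu]. 
    assert (P : 0 < d t - Rabs (u - t)) by lra.
    exists (mkposreal _ P). intros v Hv. unfold disc in Hv; simpl in Hv. simpl. split; auto.
    replace (v - t) with ((v - u) + (u - t)) by ring.
    pose proof (Rabs_triang (v - u) (u - t)). lra.
- exists l. split.
  + intros t Ht. apply Hl in Ht. destruct Ht as [Ht _]. exact Ht.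
  + intros u Hu. destruct (Hcov u Hu) as [t [[Ht1 Ht2] Dt]].
    exists t; split; auto. apply Hl. split; auto.
Qed.

Lemma listmin (T : list R) (d : R -> R) : (forall t, List.In t T -> 0 < d t) ->
  exists e, 0 < e /\ forall t, List.In t T -> e <= d t.
Proof.
induction T as [|a T IH]; intro H.
- exists 1; split; [lra|]. intros t [].
- destruct IH as [e [e0 He]]. { intros t Ht; apply H; right; auto. }
  exists (Rmin e (d a)); split.
  + apply Rmin_pos; auto. apply H; left; auto.
  + intros t [E|Ht].
    * subst; apply Rmin_r.
    * eapply Rle_trans; [apply Rmin_l|auto].
Qed.

Section Cube.
Variables (m : nat) (L : R) (I : Type) (U : I -> pt m -> Prop).
Hypothesis (Uo : forall i, open_Rm (U i)).
Hypothesis (Ucov : forall x : pt m, (forall j, 0 <= x j <= L) -> exists i, U i x).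

Definition Ptube (n : nat) := forall c : pt m, (forall j : 'I_m, (n <= j)%N -> 0 <= c j <= L) ->
  exists (l : list I) (dl : R), 0 < dl /\ forall x : pt m,
    (forall j : 'I_m, (j < n)%N -> 0 <= x j <= L) ->
    (forall j : 'I_m, (n <= j)%N -> Rabs (x j - c j) < dl) ->
    exists i, List.In i l /\ U i x.

Lemma Ptube0 : Ptube 0.
Proof.
intros c Hc. destruct (Ucov c (fun j => Hc j (leq0n j))) as [i Hi].
destruct (Uo Hi) as [e [e0 He]].
exists (i :: nil), e; split; auto. intros x _ Hx. exists i; split; [left; auto|].
apply He. intro j; apply Hx; apply leq0n.
Qed.

Lemma PtubeS n : (n < m)%N -> Ptube n -> Ptube n.+1.
Proof.
intros nm IH c Hc.
set jn := Ordinal nm.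
set ct := fun (t : R) (j : 'I_m) => if (nat_of_ord j == n) then t else c j.
assert (HF : forall t : R, exists p : list I * R, 0 <= t <= L -> 0 < snd p /\ forall x : pt m,
    (forall j : 'I_m, (j < n)%N -> 0 <= x j <= L) ->
    (forall j : 'I_m, (n <= j)%N -> Rabs (x j - ct t j) < snd p) ->
    exists i, List.In i (fst p) /\ U i x).
{ intro t. destruct (classic (0 <= t <= L)) as [Ht|Ht].
  - destruct (IH (ct t)) as [l [dl [dl0 Hl]]].
    + intros j Hj. unfold ct. case: eqP => E; auto. apply Hc.
      rewrite ltn_neqAle Hj andbT. apply/eqP => E'; apply E; auto.
    + exists (l, dl); intros _; split; auto.
  - exists (nil, 1); intro; contradiction. }
set F := fun t => proj1_sig (constructive_indefinite_description _ (HF t)).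
assert (FP : forall t, 0 <= t <= L -> 0 < snd (F t) /\ forall x : pt m,
    (forall j : 'I_m, (j < n)%N -> 0 <= x j <= L) ->
    (forall j : 'I_m, (n <= j)%N -> Rabs (x j - ct t j) < snd (F t)) ->
    exists i, List.In i (fst (F t)) /\ U i x).
{ intro t; exact (proj2_sig (constructive_indefinite_description _ (HF t))). }
destruct (@cover1d L (fun t => snd (F t))) as [T [HT1 HT2]].
{ intros t Ht; apply (FP t Ht). }
destruct (@listmin T (fun t => snd (F t))) as [e [e0 He]].
{ intros t Ht; apply (FP t (HT1 t Ht)). }
exists (List.flat_map (fun t => fst (F t)) T), e; split; auto.
intros x Hx1 Hx2.
assert (Hxn : 0 <= x jn <= L) by (apply Hx1; simpl; by []).
destruct (HT2 (x jn) Hxn) as [t [Tt Dt]].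
destruct (FP t (HT1 t Tt)) as [_ Ht].
destruct (Ht x) as [i [Hi Ui]].
- intros j Hj; apply Hx1. apply: (ltn_trans Hj); by [].
- intros j Hj. unfold ct. case: eqP => E.
  + assert (j = jn) by (apply: ord_inj; simpl; exact E). subst j. exact Dt.
  + eapply Rlt_le_trans; [apply Hx2| apply He; auto].
    rewrite ltn_neqAle Hj andbT. apply/eqP => E'; apply E; auto.
- exists i; split; auto. apply List.in_flat_map. exists t; split; auto.
Qed.

Lemma Ptube_all n : (n <= m)%N -> Ptube n.
Proof.
elim: n => [|n IHn] Hn.
- exact Ptube0.
- apply PtubeS; [exact Hn|]. apply IHn. apply ltnW; exact Hn.
Qed.

Lemma cube_cover : exists l : list I, forall x : pt m, (forall j, 0 <= x j <= L) ->
  exists i, List.In i l /\ U i x.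
Proof.
destruct (@Ptube_all m (leqnn m) (fun _ => 0)) as [l [dl [_ Hl]]].
{ intros j Hj. exfalso. move: (ltn_ord j). rewrite ltnNge Hj. by []. }
exists l. intros x Hx. apply Hl.
- intros j _; auto.
- intros j Hj. exfalso. move: (ltn_ord j). rewrite ltnNge Hj. by [].
Qed.
End Cube.

Lemma part3 m h : compact_Rm (V0 (m:=m) h).
Proof.
intros I U Uo Ucov.
set U' := fun (o : option I) => match o with Some i => U i | None => fun x => ~ V0 h x end.
destruct (@cube_cover m (2 * PI) (option I) U') as [l' Hl'].
- intros [i|]; simpl; auto. apply V0_compl_open.
- intros x Hx. destruct (classic (V0 h x)) as [HV|HV].
  + destruct (Ucov x HV) as [i Hi]. exists (Some i); auto.
  + exists None; auto.
- exists (List.flat_map (fun o => match o with Some i => i :: nil | None => nil end) l').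
  intros x Hx. destruct (Hl' x (proj2 Hx)) as [[i|] [Hi Ui]].
  + exists i; split; auto. apply List.in_flat_map. exists (Some i); split; auto. left; auto.
  + simpl in Ui; contradiction.
Qed.

Lemma prod_s_PI m : prod_s (fun _ : 'I_m => PI) = 2 ^ m.
Proof.
unfold prod_s. rewrite big_const_ord.
assert (s PI = 2) by (unfold s; rewrite sin_PI2; ring).
rewrite H. elim: m => [|n IH]; simpl; [reflexivity|]. rewrite IH; reflexivity.
Qed.

Unset Implicit Arguments.

Theorem lemma5 (m : nat) (h : R) :
  (1 <= m)%nat -> 0 < h -> h < 2 ^ m ->
  (forall k k' : 'I_m -> Z, k <> k' ->
     forall x : pt m, ~ (Vk h k x /\ Vk h k' x)) /\
  (forall x : pt m, V h x <-> exists k : 'I_m -> Z, Vk h k x) /\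
  @compact_Rm m (@V0 m h) /\
  @strictly_convex m (@V0 m h) /\
  (exists z : pt m, @interior_pt m (@V0 m h) z) /\
  (forall x : pt m, V0 h x <-> (V h x /\ forall j, 0 < x j < 2 * PI)).
Proof.
intros Hm hp hm.
split; [exact (@part1 m h hp)|].
split; [intro x; exact (@part2 m h x)|].
split; [exact (@part3 m h)|].
split; [exact (@part4 m h hp)|].
split.
- exists (fun _ => PI). apply interior_strict.
  + intro j; pose proof PI_RGT_0; lra.
  + rewrite prod_s_PI Rabs_right; [lra|]. left; apply pow_lt; lra.
- intro x; exact (@part6 m h x hp).
Qed.
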